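(* Let $\gamma,\kappa_1,\kappa_2\ge 0$, $c>0$ and $0<a_1<a_2$ with $\gamma>\kappa_2$, and consider the scalar state-dependent delay differential equation $$u'(t)=-\gamma u(t)-\kappa_1 u\bigl(t-a_1-cu(t)\bigr)-\kappa_2 u\bigl(t-a_2-cu(t)\bigr).$$ Define the linear difference operator $L$ by $$Lu(s)=-\gamma u(s)-\kappa_1u(s-a_1)-\kappa_2u(s-a_2),$$ so that $$L^2u(s)=-\gamma Lu(s)-\sum_{j=1}^2\kappa_jLu(s-a_j).$$ Then for solutions $u$ lying in the (local) center or unstable manifold of the steady state $u\equiv0$, the equation can be written as the constant-delay equation $$u'(t)=Lu(t)+\sum_{i=1}^2\kappa_i\,c\,u(t)\,Lu(t-a_i)+\sum_{i,j=1}^2\kappa_i\kappa_j\,c^2\,u(t)\,u(t-a_i)\,Lu(t-a_i-a_j)-\frac12\bigl(cu(t)\bigr)^2\sum_{i=1}^2\kappa_i\,L^2u(t-a_i)+\mathcal{R}(t),$$ where the remainder satisfies $\mathcal{R}(t)=\mathcal{O}(\|u\|_5^4)$ with $\|u\|_5=\sup_{\theta\in[-5a_2,0]}|u(\theta)|$.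
   Context: The equation is the two-delay model $u'(t)=-\gamma u(t)-\kappa_1u(\alpha_1(t,u(t)))-\kappa_2u(\alpha_2(t,u(t)))$ with $\alpha_i(t,u(t))=t-a_i-c_iu(t)$, taken here with $c_1=c_2=c$. Under $\gamma>\kappa_2$ the state-dependent delays are bounded and never become advanced. Solutions on the center or unstable manifold of $u\equiv0$ are those that can be extended backward in time for all negative times while remaining near $0$. The remainder estimate $\mathcal{O}(\|u\|_5^4)$ refers to small solutions, i.e. $u$ close to the steady state $0$. *)

(* Defs.v *)
From Stdlib Require Import Reals.
Open Scope R_scope.

Definition Lop (g k1 k2 a1 a2 : R) (u : R -> R) (s : R) : R :=
  - g * u s - k1 * u (s - a1) - k2 * u (s - a2).

Definition L2op (g k1 k2 a1 a2 : R) (u : R -> R) (s : R) : R :=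
  Lop g k1 k2 a1 a2 (Lop g k1 k2 a1 a2 u) s.

Definition sdde_rhs (g k1 k2 a1 a2 c : R) (u : R -> R) (t : R) : R :=
  - g * u t - k1 * u (t - a1 - c * u t) - k2 * u (t - a2 - c * u t).

Definition expansion (g k1 k2 a1 a2 c : R) (u : R -> R) (t : R) : R :=
  let L := Lop g k1 k2 a1 a2 u in
  let L2 := L2op g k1 k2 a1 a2 u in
  L t
  + (k1 * c * u t * L (t - a1) + k2 * c * u t * L (t - a2))
  + ( k1 * k1 * c ^ 2 * u t * u (t - a1) * L (t - a1 - a1)
    + k1 * k2 * c ^ 2 * u t * u (t - a1) * L (t - a1 - a2)
    + k2 * k1 * c ^ 2 * u t * u (t - a2) * L (t - a2 - a1)
    + k2 * k2 * c ^ 2 * u t * u (t - a2) * L (t - a2 - a2))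
  - / 2 * (c * u t) ^ 2 * (k1 * L2 (t - a1) + k2 * L2 (t - a2)).

Definition remainder (g k1 k2 a1 a2 c : R) (u : R -> R) (t : R) : R :=
  sdde_rhs g k1 k2 a1 a2 c u t - expansion g k1 k2 a1 a2 c u t.

(* Main.v *)
Require Import Defs.
From Stdlib Require Import Reals Lra Psatz.
From Coquelicot Require Import Coquelicot.
Open Scope R_scope.

Ltac rcase := unfold Rmin, Rmax, Rabs in *;
  repeat match goal with
  | |- context [Rle_dec ?a ?b] => destruct (Rle_dec a b)
  | H : context [Rle_dec ?a ?b] |- _ => destruct (Rle_dec a b)
  | |- context [Rcase_abs ?a] => destruct (Rcase_abs a)
  | H : context [Rcase_abs ?a] |- _ => destruct (Rcase_abs a)
  end; try lra.

Lemma deq (f : R -> R) x (l l' : R) : is_derive f x l -> @eq R l l' -> is_derive f x l'.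
Proof. intros H <-; exact H. Qed.

Lemma dplus (f h : R -> R) x a b : is_derive f x a -> is_derive h x b ->
  is_derive (fun y => f y + h y) x (a + b).
Proof. intros; apply (is_derive_plus f h); auto. Qed.

Lemma dminus (f h : R -> R) x a b : is_derive f x a -> is_derive h x b ->
  is_derive (fun y => f y - h y) x (a - b).
Proof. intros; apply (is_derive_minus f h); auto. Qed.

Lemma dscal (f : R -> R) k x a : is_derive f x a ->
  is_derive (fun y => k * f y) x (k * a).
Proof. intros; apply is_derive_scal; auto. Qed.

Lemma dcomp (f h : R -> R) x a b : is_derive f (h x) a -> is_derive h x b ->
  is_derive (fun y => f (h y)) x (b * a).
Proof. intros; apply (is_derive_comp f h); auto. Qed.

Lemma did x : is_derive (fun y : R => y) x 1.
Proof. apply (@is_derive_id R_AbsRing). Qed.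

Lemma dconst (a : R) x : is_derive (fun _ : R => a) x 0.
Proof. apply (@is_derive_const R_AbsRing R_NormedModule a). Qed.

Lemma dopp (f : R -> R) x a : is_derive f x a -> is_derive (fun y => - f y) x (- a).
Proof. intros; apply (is_derive_opp f); auto. Qed.

Lemma dlin k x : is_derive (fun r => r * k) x k.
Proof. auto_derive. auto. ring. Qed.
Lemma dsq k x : is_derive (fun r => r * r / 2 * k) x (x * k).
Proof. auto_derive. auto. field. Qed.

Lemma betw_abs h r : Rmin 0 h <= r <= Rmax 0 h -> - Rabs h <= r <= Rabs h.
Proof. intros; rcase. Qed.

Lemma mvt_bound (F dF : R -> R) a b L :
  (forall z, Rmin a b <= z <= Rmax a b -> is_derive F z (dF z)) ->
  (forall z, Rmin a b <= z <= Rmax a b -> Rabs (dF z) <= L) ->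
  Rabs (F b - F a) <= L * Rabs (b - a).
Proof.
  intros HD HB.
  destruct (MVT_gen F a b dF) as [c [Hc E]].
  - intros x Hx; apply HD; lra.
  - intros x Hx. apply continuity_pt_filterlim.
    apply (@ex_derive_continuous R_AbsRing R_NormedModule). exists (dF x). apply HD; lra.
  - rewrite E, Rabs_mult. apply Rmult_le_compat_r. apply Rabs_pos. apply HB; lra.
Qed.

Lemma taylor2 (f f1 f2 : R -> R) y h Kc B :
  (forall z, y - Rabs h <= z <= y + Rabs h -> is_derive f z (f1 z)) ->
  (forall z, y - Rabs h <= z <= y + Rabs h -> is_derive f1 z (f2 z)) ->
  (forall z, y - Rabs h <= z <= y + Rabs h -> Rabs (f2 z - Kc) <= B) ->
  Rabs (f (y - h) - f y + h * f1 y - h * h / 2 * Kc) <= B * (h * h).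
Proof.
  intros H1 H2 H3.
  pose (psi := fun r => f (y - r) - f y + r * f1 y - r * r / 2 * Kc).
  pose (psi1 := fun r => - f1 (y - r) + f1 y - r * Kc).
  pose (psi2 := fun r => f2 (y - r) - Kc).
  assert (Hd1 : forall r, Rmin 0 h <= r <= Rmax 0 h -> is_derive psi r (psi1 r)).
  { intros r Hr. unfold psi, psi1.
    eapply deq.
    - apply (dminus (fun r => f (y - r) - f y + r * f1 y) (fun r => r*r/2*Kc)).
      apply (dplus (fun r => f (y - r) - f y) (fun r => r * f1 y)).
      apply (dminus (fun r => f (y - r)) (fun r => f y)).
      apply (dcomp f (fun r => y - r)). apply H1. apply betw_abs in Hr; lra.
      apply (dminus (fun _ => y) (fun r => r)). apply dconst. apply did. apply dconst.
      apply dlin. apply dsq.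
    - ring. }
  assert (Hd2 : forall r, Rmin 0 h <= r <= Rmax 0 h -> is_derive psi1 r (psi2 r)).
  { intros r Hr. unfold psi1, psi2.
    eapply deq.
    - apply (dminus (fun r => - f1 (y - r) + f1 y) (fun r => r * Kc)).
      apply (dplus (fun r => - f1 (y - r)) (fun r => f1 y)).
      apply (dopp (fun r => f1 (y - r))).
      apply (dcomp f1 (fun r => y - r)). apply H2. apply betw_abs in Hr; lra.
      apply (dminus (fun _ => y) (fun r => r)). apply dconst. apply did.
      apply dconst. apply dlin.
    - ring. }
  assert (Hb1 : forall r, Rmin 0 h <= r <= Rmax 0 h -> Rabs (psi1 r) <= B * Rabs h).
  { intros r Hr.
    assert (E : psi1 r = psi1 r - psi1 0).
    { unfold psi1. rewrite Rminus_0_r. ring. }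
    rewrite E.
    eapply Rle_trans. apply (mvt_bound psi1 psi2 0 r B).
    - intros z Hz. apply Hd2. rcase.
    - intros z Hz. unfold psi2. apply H3. rcase.
    - assert (0 <= B).
      { eapply Rle_trans. apply Rabs_pos. apply (H3 y). rcase. }
      apply Rmult_le_compat_l. lra. rcase. }
  assert (E : f (y - h) - f y + h * f1 y - h * h / 2 * Kc = psi h - psi 0).
  { unfold psi; cbv beta. rewrite Rminus_0_r. field. }
  rewrite E.
  eapply Rle_trans. apply (mvt_bound psi psi1 0 h (B * Rabs h)).
  - exact Hd1.
  - exact Hb1.
  - rewrite Rminus_0_r, Rmult_assoc, <- Rabs_mult.
    rewrite Rabs_right. lra.
    apply Rle_ge. nra.
Qed.

Lemma abs3 (a b cc x y z : R) : 0 <= a -> 0 <= b -> 0 <= cc ->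
  Rabs (- a * x - b * y - cc * z) <= a * Rabs x + b * Rabs y + cc * Rabs z.
Proof.
  intros.
  assert (E1 : Rabs (- a * x) = a * Rabs x)
    by (rewrite Rabs_mult, Rabs_Ropp, Rabs_pos_eq; lra).
  assert (E2 : Rabs (- (b * y)) = b * Rabs y)
    by (rewrite Rabs_Ropp, Rabs_mult, Rabs_pos_eq; lra).
  assert (E3 : Rabs (- (cc * z)) = cc * Rabs z)
    by (rewrite Rabs_Ropp, Rabs_mult, Rabs_pos_eq; lra).
  unfold Rminus.
  pose proof (Rabs_triang (- a * x + - (b * y)) (- (cc * z))).
  pose proof (Rabs_triang (- a * x) (- (b * y))).
  lra.
Qed.

Lemma abs2 (b cc y z : R) : 0 <= b -> 0 <= cc ->
  Rabs (b * y + cc * z) <= b * Rabs y + cc * Rabs z.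
Proof.
  intros. eapply Rle_trans. apply Rabs_triang.
  rewrite !Rabs_mult, (Rabs_pos_eq b), (Rabs_pos_eq cc) by lra. lra.
Qed.

Lemma tri3 (a b cc : R) : Rabs (a + b - cc) <= Rabs a + Rabs b + Rabs cc.
Proof.
  unfold Rminus. eapply Rle_trans. apply Rabs_triang.
  rewrite Rabs_Ropp. pose proof (Rabs_triang a b). lra.
Qed.

Lemma minmax lo hi a b w : lo <= a <= hi -> lo <= b <= hi ->
  Rmin a b <= w <= Rmax a b -> lo <= w <= hi.
Proof. intros; rcase. Qed.

Lemma abs_le_elim x m : Rabs x <= m -> - m <= x <= m.
Proof. intros; rcase. Qed.

Definition D2f g k1 k2 a1 a2 c (u : R -> R) x :=
  - g * sdde_rhs g k1 k2 a1 a2 c u x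
  - k1 * ((1 - c * sdde_rhs g k1 k2 a1 a2 c u x) * sdde_rhs g k1 k2 a1 a2 c u (x - a1 - c * u x))
  - k2 * ((1 - c * sdde_rhs g k1 k2 a1 a2 c u x) * sdde_rhs g k1 k2 a1 a2 c u (x - a2 - c * u x)).

Definition B2d g k1 k2 c dl :=
  g * (g + k1 + k2) + (k1 + k2) * ((1 + c * ((g + k1 + k2) * dl)) * (g + k1 + k2)).
Definition EBd g k1 k2 c dl M :=
  (k1 + k2) * ((c * M) * ((k1 + k2) * ((g + k1 + k2) * M * (c * M)))
     + B2d g k1 k2 c dl * M * ((c * M) * (c * M))).
Definition Qbd g k1 k2 c M :=
  (k1 + k2) * ((g + k1 + k2) * M * (c * M)) + (g + k1 + k2) * ((g + k1 + k2) * M * (c * M))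
  + (c * ((g + k1 + k2) * M)) * ((g + k1 + k2) * M).
Definition B3d g k1 k2 c M :=
  g * ((k1 + k2) * ((g + k1 + k2) * M * (c * M))) + (k1 + k2) * Qbd g k1 k2 c M.
Definition TBd g k1 k2 c M :=
  (B3d g k1 k2 c M + (g + k1 + k2) * ((g + k1 + k2) * ((g + k1 + k2) * M * (c * M))))
  * ((c * M) * (c * M)).
Definition bnd g k1 k2 c dl M :=
  k1 * ((c * M) * EBd g k1 k2 c dl M + TBd g k1 k2 c M)
  + k2 * ((c * M) * EBd g k1 k2 c dl M + TBd g k1 k2 c M).

Section Est.
Variables g k1 k2 a1 a2 c dl : R.
Variable u : R -> R.
Variables t M : R.
Hypothesis Hg : 0 <= g.
Hypothesis Hk1 : 0 <= k1.
Hypothesis Hk2 : 0 <= k2.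
Hypothesis Hc : 0 < c.
Hypothesis Ha1 : 0 < a1.
Hypothesis Ha12 : a1 < a2.
Hypothesis He : c * dl <= a1 / 8.
Hypothesis Ht : t < 0.
Hypothesis HM0 : 0 <= M.
Hypothesis HMd : M <= dl.
Hypothesis HU : forall y, y <= 0 -> Rabs (u y) <= dl.
Hypothesis HD : forall y, y < 0 -> is_derive u y (sdde_rhs g k1 k2 a1 a2 c u y).
Hypothesis HW : forall y, t - 5 * a2 <= y <= t -> Rabs (u y) <= M.

Local Notation D1 := (sdde_rhs g k1 k2 a1 a2 c u).
Local Notation D2 := (D2f g k1 k2 a1 a2 c u).
Local Notation Lu := (Lop g k1 k2 a1 a2 u).
Local Notation L2u := (L2op g k1 k2 a1 a2 u).
Local Notation K := (g + k1 + k2).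

Lemma e0 : 0 <= c * dl.
Proof. apply Rmult_le_pos; lra. Qed.

Lemma cub y : y <= 0 -> - (c * dl) <= c * u y <= c * dl.
Proof.
  intros Hy. destruct (abs_le_elim _ _ (HU y Hy)) as [H1 H2]. split; nra.
Qed.

Lemma cuM y : t - 5 * a2 <= y <= t -> Rabs (c * u y) <= c * M.
Proof.
  intros Hy. rewrite Rabs_mult, (Rabs_pos_eq c) by lra.
  apply Rmult_le_compat_l. lra. auto.
Qed.

Lemma D1b x : t - 4 * a2 + c * dl <= x <= t -> Rabs (D1 x) <= K * M.
Proof.
  intros Hx. unfold sdde_rhs.
  eapply Rle_trans. apply abs3; auto.
  pose proof (cub x ltac:(lra)).
  assert (A := HW x ltac:(lra)).
  assert (B := HW (x - a1 - c * u x) ltac:(lra)).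
  assert (C := HW (x - a2 - c * u x) ltac:(lra)).
  assert (g * Rabs (u x) <= g * M) by (apply Rmult_le_compat_l; lra).
  assert (k1 * Rabs (u (x - a1 - c * u x)) <= k1 * M) by (apply Rmult_le_compat_l; lra).
  assert (k2 * Rabs (u (x - a2 - c * u x)) <= k2 * M) by (apply Rmult_le_compat_l; lra).
  lra.
Qed.

Lemma ulip y z : t - 4 * a2 + c * dl <= y <= t -> t - 4 * a2 + c * dl <= z <= t ->
  Rabs (u y - u z) <= (K * M) * Rabs (y - z).
Proof.
  intros Hy Hz.
  apply (mvt_bound u D1 z y).
  - intros w Hw. pose proof (minmax _ _ _ _ _ Hz Hy Hw). apply HD. lra.
  - intros w Hw. pose proof (minmax _ _ _ _ _ Hz Hy Hw). apply D1b. lra.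
Qed.

Lemma D1L x : t - 3 * a2 + 2 * (c * dl) <= x <= t ->
  Rabs (D1 x - Lu x) <= (k1 + k2) * (K * M * (c * M)).
Proof.
  intros Hx.
  pose proof (cub x ltac:(lra)).
  assert (E : D1 x - Lu x = k1 * (u (x - a1) - u (x - a1 - c * u x))
                          + k2 * (u (x - a2) - u (x - a2 - c * u x))).
  { unfold sdde_rhs, Lop. ring. }
  rewrite E. eapply Rle_trans. apply abs2; auto.
  assert (CM := cuM x ltac:(lra)).
  assert (KM : 0 <= K * M) by nra.
  assert (U1 : Rabs (u (x - a1) - u (x - a1 - c * u x)) <= K * M * (c * M)).
  { eapply Rle_trans. apply ulip; lra.
    replace (x - a1 - (x - a1 - c * u x)) with (c * u x) by ring.
    apply Rmult_le_compat_l; auto. }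
  assert (U2 : Rabs (u (x - a2) - u (x - a2 - c * u x)) <= K * M * (c * M)).
  { eapply Rle_trans. apply ulip; lra.
    replace (x - a2 - (x - a2 - c * u x)) with (c * u x) by ring.
    apply Rmult_le_compat_l; auto. }
  assert (k1 * Rabs (u (x - a1) - u (x - a1 - c * u x)) <= k1 * (K * M * (c * M)))
    by (apply Rmult_le_compat_l; lra).
  assert (k2 * Rabs (u (x - a2) - u (x - a2 - c * u x)) <= k2 * (K * M * (c * M)))
    by (apply Rmult_le_compat_l; lra).
  lra.
Qed.

Lemma D1d x : x < 0 -> is_derive D1 x (D2 x).
Proof.
  intros Hx. pose proof (cub x ltac:(lra)).
  eapply deq.
  - unfold sdde_rhs at 1.
    apply (dminus (fun x => - g * u x - k1 * u (x - a1 - c * u x))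
                  (fun x => k2 * u (x - a2 - c * u x))).
    apply (dminus (fun x => - g * u x) (fun x => k1 * u (x - a1 - c * u x))).
    apply (dscal u). apply HD; lra.
    apply (dscal (fun x => u (x - a1 - c * u x))).
    apply (dcomp u (fun x => x - a1 - c * u x)). apply HD; lra.
    apply (dminus (fun x => x - a1) (fun x => c * u x)).
    apply (dminus (fun x => x) (fun _ => a1)). apply did. apply dconst.
    apply (dscal u). apply HD; lra.
    apply (dscal (fun x => u (x - a2 - c * u x))).
    apply (dcomp u (fun x => x - a2 - c * u x)). apply HD; lra.
    apply (dminus (fun x => x - a2) (fun x => c * u x)).
    apply (dminus (fun x => x) (fun _ => a2)). apply did. apply dconst.
    apply (dscal u). apply HD; lra.
  - unfold D2f. ring.
Qed.

Lemma D2b x : t - 3 * a2 + 2 * (c * dl) <= x <= t ->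
  Rabs (D2 x) <= B2d g k1 k2 c dl * M.
Proof.
  intros Hx. pose proof (cub x ltac:(lra)).
  unfold D2f. eapply Rle_trans. apply abs3; auto.
  assert (A := D1b x ltac:(lra)).
  assert (B := D1b (x - a1 - c * u x) ltac:(lra)).
  assert (C := D1b (x - a2 - c * u x) ltac:(lra)).
  assert (KM : 0 <= K * M) by nra.
  assert (KMd : K * M <= K * dl) by (apply Rmult_le_compat_l; lra).
  assert (P : Rabs (1 - c * D1 x) <= 1 + c * (K * dl)).
  { unfold Rminus. eapply Rle_trans. apply Rabs_triang.
    rewrite Rabs_R1, Rabs_Ropp, Rabs_mult, (Rabs_pos_eq c) by lra.
    assert (c * Rabs (D1 x) <= c * (K * dl)) by (apply Rmult_le_compat_l; lra). lra. }
  assert (P1 : Rabs ((1 - c * D1 x) * D1 (x - a1 - c * u x)) <= (1 + c * (K * dl)) * (K * M)).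
  { rewrite Rabs_mult. apply Rmult_le_compat; auto using Rabs_pos. }
  assert (P2 : Rabs ((1 - c * D1 x) * D1 (x - a2 - c * u x)) <= (1 + c * (K * dl)) * (K * M)).
  { rewrite Rabs_mult. apply Rmult_le_compat; auto using Rabs_pos. }
  assert (g * Rabs (D1 x) <= g * (K * M)) by (apply Rmult_le_compat_l; lra).
  assert (k1 * Rabs ((1 - c * D1 x) * D1 (x - a1 - c * u x)) <= k1 * ((1 + c * (K * dl)) * (K * M)))
    by (apply Rmult_le_compat_l; lra).
  assert (k2 * Rabs ((1 - c * D1 x) * D1 (x - a2 - c * u x)) <= k2 * ((1 + c * (K * dl)) * (K * M)))
    by (apply Rmult_le_compat_l; lra).
  unfold B2d.
  replace ((g * K + (k1 + k2) * ((1 + c * (K * dl)) * K)) * M)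
    with (g * (K * M) + k1 * ((1 + c * (K * dl)) * (K * M)) + k2 * ((1 + c * (K * dl)) * (K * M)))
    by ring.
  lra.
Qed.

Lemma lopd (v : R -> R) x x' :
  Rabs (Lop g k1 k2 a1 a2 v x - Lop g k1 k2 a1 a2 v x') <=
  g * Rabs (v x - v x') + k1 * Rabs (v (x - a1) - v (x' - a1))
  + k2 * Rabs (v (x - a2) - v (x' - a2)).
Proof.
  replace (Lop g k1 k2 a1 a2 v x - Lop g k1 k2 a1 a2 v x') with
    (- g * (v x - v x') - k1 * (v (x - a1) - v (x' - a1)) - k2 * (v (x - a2) - v (x' - a2)))
    by (unfold Lop; ring).
  apply abs3; auto.
Qed.

Lemma Lulip x x' : t - 3 * a2 + c * dl <= x <= t -> t - 3 * a2 + c * dl <= x' <= t ->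
  Rabs (Lu x - Lu x') <= K * (K * M * Rabs (x - x')).
Proof.
  intros Hx Hx'. eapply Rle_trans. apply lopd.
  assert (A := ulip x x' ltac:(lra) ltac:(lra)).
  assert (B := ulip (x - a1) (x' - a1) ltac:(lra) ltac:(lra)).
  assert (C := ulip (x - a2) (x' - a2) ltac:(lra) ltac:(lra)).
  replace (x - a1 - (x' - a1)) with (x - x') in B by ring.
  replace (x - a2 - (x' - a2)) with (x - x') in C by ring.
  assert (g * Rabs (u x - u x') <= g * (K * M * Rabs (x - x'))) by (apply Rmult_le_compat_l; lra).
  assert (k1 * Rabs (u (x - a1) - u (x' - a1)) <= k1 * (K * M * Rabs (x - x'))) by (apply Rmult_le_compat_l; lra).
  assert (k2 * Rabs (u (x - a2) - u (x' - a2)) <= k2 * (K * M * Rabs (x - x'))) by (apply Rmult_le_compat_l; lra).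
  lra.
Qed.

Lemma L2lip x x' : t - 2 * a2 + c * dl <= x <= t -> t - 2 * a2 + c * dl <= x' <= t ->
  Rabs (L2u x - L2u x') <= K * (K * (K * M * Rabs (x - x'))).
Proof.
  intros Hx Hx'. unfold L2op. eapply Rle_trans. apply lopd.
  assert (A := Lulip x x' ltac:(lra) ltac:(lra)).
  assert (B := Lulip (x - a1) (x' - a1) ltac:(lra) ltac:(lra)).
  assert (C := Lulip (x - a2) (x' - a2) ltac:(lra) ltac:(lra)).
  replace (x - a1 - (x' - a1)) with (x - x') in B by ring.
  replace (x - a2 - (x' - a2)) with (x - x') in C by ring.
  assert (g * Rabs (Lu x - Lu x') <= g * (K * (K * M * Rabs (x - x')))) by (apply Rmult_le_compat_l; lra).
  assert (k1 * Rabs (Lu (x - a1) - Lu (x' - a1)) <= k1 * (K * (K * M * Rabs (x - x')))) by (apply Rmult_le_compat_l; lra).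
  assert (k2 * Rabs (Lu (x - a2) - Lu (x' - a2)) <= k2 * (K * (K * M * Rabs (x - x')))) by (apply Rmult_le_compat_l; lra).
  lra.
Qed.

Lemma Qb x aj : t - 2 * a2 + 3 * (c * dl) <= x <= t -> a1 <= aj <= a2 ->
  Rabs ((D1 (x - aj - c * u x) - Lu (x - aj - c * u x))
        + (Lu (x - aj - c * u x) - Lu (x - aj)) - c * D1 x * D1 (x - aj - c * u x))
  <= Qbd g k1 k2 c M.
Proof.
  intros Hx Haj. pose proof (cub x ltac:(lra)).
  eapply Rle_trans. apply tri3.
  assert (KM : 0 <= K * M) by nra.
  assert (A := D1L (x - aj - c * u x) ltac:(lra)).
  assert (B := Lulip (x - aj - c * u x) (x - aj) ltac:(lra) ltac:(lra)).
  replace (x - aj - c * u x - (x - aj)) with (- (c * u x)) in B by ring.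
  rewrite Rabs_Ropp in B.
  assert (CM := cuM x ltac:(lra)).
  assert (B' : Rabs (Lu (x - aj - c * u x) - Lu (x - aj)) <= K * (K * M * (c * M))).
  { eapply Rle_trans. apply B. apply Rmult_le_compat_l. lra.
    apply Rmult_le_compat_l; lra. }
  assert (D := D1b x ltac:(lra)).
  assert (D' := D1b (x - aj - c * u x) ltac:(lra)).
  assert (C : Rabs (c * D1 x * D1 (x - aj - c * u x)) <= c * (K * M) * (K * M)).
  { rewrite !Rabs_mult, (Rabs_pos_eq c) by lra.
    apply Rmult_le_compat; try apply Rmult_le_pos; auto using Rabs_pos; try lra.
    apply Rmult_le_compat_l; lra. }
  unfold Qbd. lra.
Qed.

Lemma D2L2 x : t - 2 * a2 + 3 * (c * dl) <= x <= t ->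
  Rabs (D2 x - L2u x) <= B3d g k1 k2 c M.
Proof.
  intros Hx. pose proof e0.
  assert (A := D1L x ltac:(lra)).
  assert (B := Qb x a1 ltac:(lra) ltac:(lra)).
  assert (C := Qb x a2 ltac:(lra) ltac:(lra)).
  set (Q1 := (D1 (x - a1 - c * u x) - Lu (x - a1 - c * u x))
        + (Lu (x - a1 - c * u x) - Lu (x - a1)) - c * D1 x * D1 (x - a1 - c * u x)).
  set (Q2 := (D1 (x - a2 - c * u x) - Lu (x - a2 - c * u x))
        + (Lu (x - a2 - c * u x) - Lu (x - a2)) - c * D1 x * D1 (x - a2 - c * u x)).
  assert (E : D2 x - L2u x = - g * (D1 x - Lu x) - k1 * Q1 - k2 * Q2).
  { unfold Q1, Q2, D2f, L2op. unfold Lop at 1. ring. }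
  rewrite E. eapply Rle_trans. apply abs3; auto.
  fold Q1 in B. fold Q2 in C.
  assert (g * Rabs (D1 x - Lu x) <= g * ((k1 + k2) * (K * M * (c * M)))) by (apply Rmult_le_compat_l; lra).
  assert (k1 * Rabs Q1 <= k1 * Qbd g k1 k2 c M) by (apply Rmult_le_compat_l; lra).
  assert (k2 * Rabs Q2 <= k2 * Qbd g k1 k2 c M) by (apply Rmult_le_compat_l; lra).
  unfold B3d. lra.
Qed.

Ltac pos := repeat (apply Rplus_le_le_0_compat || apply Rmult_le_pos); try lra.

Lemma B2d0 : 0 <= B2d g k1 k2 c dl.
Proof. pose proof e0. unfold B2d. pos. Qed.
Lemma B3d0 : 0 <= B3d g k1 k2 c M.
Proof. unfold B3d, Qbd. pos. Qed.

Lemma habs y : y <= 0 -> Rabs (c * u y) <= c * dl.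
Proof. intros Hy. apply Rabs_le. apply cub; auto. Qed.

Lemma sq_le h m : Rabs h <= m -> h * h <= m * m.
Proof.
  intros H. replace (h * h) with (Rabs h * Rabs h).
  apply Rmult_le_compat; auto using Rabs_pos.
  rewrite <- Rabs_mult. apply Rabs_pos_eq. nra.
Qed.

Lemma Rest x aj : t - a2 <= x <= t - a1 -> a1 <= aj <= a2 ->
  Rabs (u (x - aj - c * u x) - u (x - aj) + c * u x * D1 (x - aj))
  <= B2d g k1 k2 c dl * M * ((c * M) * (c * M)).
Proof.
  intros Hx Haj. pose proof e0.
  assert (H1 := habs x ltac:(lra)).
  assert (H2 := cuM x ltac:(lra)).
  assert (T := taylor2 u D1 D2 (x - aj) (c * u x) 0 (B2d g k1 k2 c dl * M)).
  rewrite Rmult_0_r, Rminus_0_r in T.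
  eapply Rle_trans. apply T.
  - intros z Hz. apply HD. lra.
  - intros z Hz. apply D1d. lra.
  - intros z Hz. rewrite Rminus_0_r. apply D2b. lra.
  - apply Rmult_le_compat_l. pose proof B2d0. pos. apply sq_le. auto.
Qed.

Lemma Eest x : t - a2 <= x <= t - a1 ->
  Rabs (D1 x - Lu x - k1 * (c * u x) * Lu (x - a1) - k2 * (c * u x) * Lu (x - a2))
  <= EBd g k1 k2 c dl M.
Proof.
  intros Hx. pose proof e0.
  assert (R1 := Rest x a1 ltac:(lra) ltac:(lra)).
  assert (R2 := Rest x a2 ltac:(lra) ltac:(lra)).
  assert (E1 := D1L (x - a1) ltac:(lra)).
  assert (E2 := D1L (x - a2) ltac:(lra)).
  assert (H2 := cuM x ltac:(lra)).
  assert (E : D1 x - Lu x - k1 * (c * u x) * Lu (x - a1) - k2 * (c * u x) * Lu (x - a2)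
    = k1 * (c * u x * (D1 (x - a1) - Lu (x - a1))
            - (u (x - a1 - c * u x) - u (x - a1) + c * u x * D1 (x - a1)))
    + k2 * (c * u x * (D1 (x - a2) - Lu (x - a2))
            - (u (x - a2 - c * u x) - u (x - a2) + c * u x * D1 (x - a2)))).
  { unfold sdde_rhs at 1. unfold Lop. ring. }
  rewrite E. eapply Rle_trans. apply abs2; auto.
  set (P := (c * M) * ((k1 + k2) * (K * M * (c * M))) + B2d g k1 k2 c dl * M * ((c * M) * (c * M))).
  assert (KM : 0 <= K * M * (c * M)) by pos.
  assert (F : forall aj, Rabs (c * u x * (D1 (x - aj) - Lu (x - aj))) <= c * M * ((k1 + k2) * (K * M * (c * M))) ->
     Rabs (u (x - aj - c * u x) - u (x - aj) + c * u x * D1 (x - aj)) <= B2d g k1 k2 c dl * M * ((c * M) * (c * M)) ->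
     Rabs (c * u x * (D1 (x - aj) - Lu (x - aj))
            - (u (x - aj - c * u x) - u (x - aj) + c * u x * D1 (x - aj))) <= P).
  { intros aj A B. unfold Rminus at 1. eapply Rle_trans. apply Rabs_triang.
    rewrite Rabs_Ropp. unfold P. lra. }
  assert (G1 : Rabs (c * u x * (D1 (x - a1) - Lu (x - a1))) <= c * M * ((k1 + k2) * (K * M * (c * M)))).
  { rewrite Rabs_mult. apply Rmult_le_compat; auto using Rabs_pos. }
  assert (G2 : Rabs (c * u x * (D1 (x - a2) - Lu (x - a2))) <= c * M * ((k1 + k2) * (K * M * (c * M)))).
  { rewrite Rabs_mult. apply Rmult_le_compat; auto using Rabs_pos. }
  assert (F1 := F a1 G1 R1). assert (F2 := F a2 G2 R2).
  assert (k1 * Rabs (c * u x * (D1 (x - a1) - Lu (x - a1))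
            - (u (x - a1 - c * u x) - u (x - a1) + c * u x * D1 (x - a1))) <= k1 * P)
    by (apply Rmult_le_compat_l; lra).
  assert (k2 * Rabs (c * u x * (D1 (x - a2) - Lu (x - a2))
            - (u (x - a2 - c * u x) - u (x - a2) + c * u x * D1 (x - a2))) <= k2 * P)
    by (apply Rmult_le_compat_l; lra).
  unfold EBd. fold P. lra.
Qed.

Lemma Test x : t - a2 <= x <= t - a1 ->
  Rabs (u (x - c * u t) - u x + c * u t * D1 x - c * u t * (c * u t) / 2 * L2u x)
  <= TBd g k1 k2 c M.
Proof.
  intros Hx. pose proof e0.
  assert (H1 := habs t ltac:(lra)).
  assert (H2 := cuM t ltac:(lra)).
  pose proof B3d0.
  assert (T := taylor2 u D1 D2 x (c * u t) (L2u x)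
      (B3d g k1 k2 c M + K * (K * (K * M * (c * M))))).
  eapply Rle_trans. apply T.
  - intros z Hz. apply HD. lra.
  - intros z Hz. apply D1d. lra.
  - intros z Hz.
    replace (D2 z - L2u x) with ((D2 z - L2u z) + (L2u z - L2u x)) by ring.
    eapply Rle_trans. apply Rabs_triang.
    assert (A := D2L2 z ltac:(lra)).
    assert (B := L2lip z x ltac:(lra) ltac:(lra)).
    assert (Rabs (z - x) <= c * M) by (apply Rabs_le; lra).
    assert (K * (K * (K * M * Rabs (z - x))) <= K * (K * (K * M * (c * M)))).
    { apply Rmult_le_compat_l. pos. apply Rmult_le_compat_l. pos.
      apply Rmult_le_compat_l. pos. auto. }
    lra.
  - unfold TBd. apply Rmult_le_compat_l. pos. apply sq_le. auto.
Qed.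

Lemma Main : Rabs (remainder g k1 k2 a1 a2 c u t) <= bnd g k1 k2 c dl M.
Proof.
  pose proof e0.
  assert (E1 := Eest (t - a1) ltac:(lra)).
  assert (E2 := Eest (t - a2) ltac:(lra)).
  assert (T1 := Test (t - a1) ltac:(lra)).
  assert (T2 := Test (t - a2) ltac:(lra)).
  assert (H2 := cuM t ltac:(lra)).
  set (e1 := D1 (t - a1) - Lu (t - a1) - k1 * (c * u (t - a1)) * Lu (t - a1 - a1)
              - k2 * (c * u (t - a1)) * Lu (t - a1 - a2)) in *.
  set (e2 := D1 (t - a2) - Lu (t - a2) - k1 * (c * u (t - a2)) * Lu (t - a2 - a1)
              - k2 * (c * u (t - a2)) * Lu (t - a2 - a2)) in *.
  set (s1 := u (t - a1 - c * u t) - u (t - a1) + c * u t * D1 (t - a1)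
              - c * u t * (c * u t) / 2 * L2u (t - a1)) in *.
  set (s2 := u (t - a2 - c * u t) - u (t - a2) + c * u t * D1 (t - a2)
              - c * u t * (c * u t) / 2 * L2u (t - a2)) in *.
  assert (E : remainder g k1 k2 a1 a2 c u t = k1 * (c * u t * e1 - s1) + k2 * (c * u t * e2 - s2)).
  { unfold e1, e2, s1, s2, remainder, expansion, sdde_rhs, L2op, Lop. cbv zeta beta. field. }
  rewrite E. eapply Rle_trans. apply abs2; auto.
  assert (F : forall e s, Rabs e <= EBd g k1 k2 c dl M -> Rabs s <= TBd g k1 k2 c M ->
            Rabs (c * u t * e - s) <= c * M * EBd g k1 k2 c dl M + TBd g k1 k2 c M).
  { intros e s A B. unfold Rminus. eapply Rle_trans. apply Rabs_triang.
    rewrite Rabs_Ropp, Rabs_mult.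
    assert (Rabs (c * u t) * Rabs e <= c * M * EBd g k1 k2 c dl M)
      by (apply Rmult_le_compat; auto using Rabs_pos).
    lra. }
  assert (F1 := F e1 s1 E1 T1). assert (F2 := F e2 s2 E2 T2).
  assert (k1 * Rabs (c * u t * e1 - s1) <= k1 * (c * M * EBd g k1 k2 c dl M + TBd g k1 k2 c M))
    by (apply Rmult_le_compat_l; lra).
  assert (k2 * Rabs (c * u t * e2 - s2) <= k2 * (c * M * EBd g k1 k2 c dl M + TBd g k1 k2 c M))
    by (apply Rmult_le_compat_l; lra).
  unfold bnd. lra.
Qed.

End Est.

Theorem theorem2p1 (g k1 k2 c a1 a2 : R)
  (hg : 0 <= g) (hk1 : 0 <= k1) (hk2 : 0 <= k2) (hc : 0 < c)
  (ha1 : 0 < a1) (ha12 : a1 < a2) (hgk : k2 < g) :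
  exists delta C : R, 0 < delta /\ 0 <= C /\
    forall u : R -> R,
      (forall t, t <= 0 -> Rabs (u t) <= delta) ->
      (forall t, t < 0 -> derivable_pt_lim u t (sdde_rhs g k1 k2 a1 a2 c u t)) ->
      forall t, t < 0 ->
      forall M : R, (forall th, t - 5 * a2 <= th <= t -> Rabs (u th) <= M) ->
        Rabs (remainder g k1 k2 a1 a2 c u t) <= C * M ^ 4.
Proof.
  set (dl := a1 / (8 * c)).
  assert (Hdl : 0 < dl) by (unfold dl; apply Rdiv_lt_0_compat; lra).
  assert (Hcdl : c * dl = a1 / 8) by (unfold dl; field; lra).
  clearbody dl.
  exists dl, (bnd g k1 k2 c dl 1).
  assert (C0 : 0 <= bnd g k1 k2 c dl 1).
  { unfold bnd, EBd, TBd, B3d, Qbd, B2d.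
    repeat (apply Rplus_le_le_0_compat || apply Rmult_le_pos); lra. }
  split; [exact Hdl|]. split; [exact C0|].
  intros u HU Hder t Ht M HM.
  set (M' := Rmin M dl).
  assert (M'M : M' <= M) by apply Rmin_l.
  assert (M'd : M' <= dl) by apply Rmin_r.
  assert (HM' : forall y, t - 5 * a2 <= y <= t -> Rabs (u y) <= M').
  { intros y Hy. apply Rmin_glb. auto. apply HU. lra. }
  assert (M'0 : 0 <= M').
  { eapply Rle_trans. apply Rabs_pos. apply (HM' t). lra. }
  clearbody M'.
  eapply Rle_trans.
  - apply (Main g k1 k2 a1 a2 c dl u t M'); auto; try lra.
    intros y Hy. apply is_derive_Reals. auto.
  - replace (bnd g k1 k2 c dl M') with (bnd g k1 k2 c dl 1 * M' ^ 4)
      by (unfold bnd, EBd, TBd, B3d, Qbd, B2d; ring).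
    apply Rmult_le_compat_l; auto.
    apply pow_incr. lra.
Qed.
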